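(* Under the hypergraph setup (with $Q(v,e)\in[0,1]$, $w(e)\in[0,1]$, $n_e\le E$ for every hyperedge $e$, $n_v\le D$ for every vertex $v$, and $\rho_{\max}=\sup_{x\in[0,E]}\rho(x)<\infty$), the generalized transition matrix satisfies $\|\tilde T\|_1\le\sqrt{1+\rho_{\max}ED}$, where $\|\cdot\|_1$ is the matrix norm induced by the vector $\ell_1$-norm (maximum absolute column sum).
   Context: Hypergraph setup: $\mathcal V=\{v_1,\dots,v_N\}$ is a finite vertex set and $\mathcal E$ a finite set of hyperedges (nonempty subsets of $\mathcal V$). $Q\in\mathbb{R}^{N\times|\mathcal E|}$ has entries $Q(v,e)\in[0,1]$ with $Q(v,e)=0$ whenever $v\notin e$. $W$ is the $|\mathcal E|\times|\mathcal E|$ diagonal matrix with entries $w(e)\in[0,1]$. $\delta(e)=\sum_{v}Q(v,e)$. $\rho:[0,\infty)\to[0,\infty)$ is a function and $\rho(D_{\mathcal E})$ is the diagonal matrix with entries $\rho(\delta(e))$. $\tilde d(v)=1+\sum_{e}w(e)Q(v,e)\delta(e)\rho(\delta(e))$ and $\tilde D_{\mathcal V}=\mathrm{diag}(\tilde d(v_1),\dots,\tilde d(v_N))$. The generalized transition matrix is $\tilde T=\tilde D_{\mathcal V}^{-1/2}\big(QW\rho(D_{\mathcal E})Q^\top+I\big)\tilde D_{\mathcal V}^{-1/2}$. $n_e$ denotes the number of vertices in $e$ and $n_v$ the number of hyperedges containing $v$. *)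

(* Defs.v *)
From mathcomp Require Import all_boot all_order all_algebra.
Set Implicit Arguments. Unset Strict Implicit. Unset Printing Implicit Defensive.
Import Order.TTheory GRing.Theory Num.Theory.
Local Open Scope ring_scope.

Section Hyper.
Variables (R : rcfType) (N M : nat).
Variables (Q : 'M[R]_(N, M)) (w : 'I_M -> R) (rho : R -> R).

Definition hdelta (e : 'I_M) : R := \sum_(v < N) Q v e.

Definition hdtilde (v : 'I_N) : R :=
  1 + \sum_(e < M) w e * Q v e * hdelta e * rho (hdelta e).

Definition hDinvsqrt : 'M[R]_N :=
  diag_mx (\row_(v < N) (Num.sqrt (hdtilde v))^-1).

Definition hWrho : 'M[R]_M := diag_mx (\row_(e < M) (w e * rho (hdelta e))).

Definition Ttilde : 'M[R]_N :=
  hDinvsqrt *m (Q *m hWrho *m Q^T + 1%:M) *m hDinvsqrt.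
End Hyper.

Definition norm1 (R : numDomainType) (n m : nat) (A : 'M[R]_(n, m)) : R :=
  \big[Num.max/0]_(j < m) \sum_(i < n) `|A i j|.

(* Main.v *)
Require Import Defs.
From mathcomp Require Import all_boot all_order all_algebra.
From mathcomp Require Import ring.
Import Order.TTheory GRing.Theory Num.Theory.
Local Open Scope ring_scope.

Theorem proposition1 (R : rcfType) (N M : nat)
  (edge : 'I_M -> {set 'I_N}) (Q : 'M[R]_(N, M)) (w : 'I_M -> R)
  (rho : R -> R) (E D : nat) (rho_max : R) :
  injective edge ->
  (forall e, edge e != set0) ->
  (forall v e, 0 <= Q v e <= 1) ->
  (forall v e, v \notin edge e -> Q v e = 0) ->
  (forall e, 0 <= w e <= 1) ->
  (forall x, 0 <= x -> 0 <= rho x) ->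
  (forall e, (#|edge e| <= E)%N) ->
  (forall v, (#|[set e | v \in edge e]| <= D)%N) ->
  (forall x, 0 <= x <= E%:R -> rho x <= rho_max) ->
  (forall b, (forall x, 0 <= x <= E%:R -> rho x <= b) -> rho_max <= b) ->
  norm1 (Ttilde Q w rho) <= Num.sqrt (1 + rho_max * E%:R * D%:R).
Proof.
move=> _ _ HQ HQ0 Hw Hrho HE HD Hmax _.
set dl := hdelta Q.
set d := hdtilde Q w rho.
set wr := fun e => w e * rho (dl e).
set A := fun i j => \sum_(e < M) Q i e * wr e * Q j e.
have Q0 v e : 0 <= Q v e by case/andP: (HQ v e).
have Q1 v e : Q v e <= 1 by case/andP: (HQ v e).
have dl0 e : 0 <= dl e by apply: sumr_ge0 => v _.
have dlE e : dl e <= E%:R.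
  rewrite /dl /hdelta (bigID (fun v => v \in edge e)) /=.
  rewrite [X in _ + X]big1 ?addr0; last by move=> v /HQ0.
  apply: le_trans (_ : \sum_(v in edge e) (1:R) <= _).
    by apply: ler_sum => v _.
  by rewrite sumr_const ler_nat HE.
have wr0 e : 0 <= wr e by rewrite mulr_ge0 ?Hrho //; case/andP: (Hw e).
have A0 i j : 0 <= A i j.
  by rewrite /A; apply: sumr_ge0 => e _; apply: mulr_ge0 => //; apply: mulr_ge0.
have AC i j : A i j = A j i.
  by rewrite /A; apply: eq_bigr => e _; ring.
have dE i : d i = 1 + \sum_j A i j.
  rewrite /d /hdtilde /A exchange_big /=; congr (_ + _); apply: eq_bigr => e _.
  rewrite -big_distrr /= -/(hdelta Q e) -/(dl e) /wr; ring.
have d1 i : 1 <= d i by rewrite dE lerDl sumr_ge0.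
have d0 i : 0 < d i by apply: lt_le_trans (d1 i).
have sq1 i : 1 <= Num.sqrt (d i) by rewrite -sqrtr1 ler_sqrt // ltW.
have sq0 i : 0 < Num.sqrt (d i) by apply: lt_le_trans (sq1 i).
have TE i j : Ttilde Q w rho i j =
   (Num.sqrt (d i))^-1 * (A i j + (i == j)%:R) * (Num.sqrt (d j))^-1.
  have M1 (X : 'M[R]_N) (a b : 'rV[R]_N) k l : (diag_mx a *m X *m diag_mx b) k l = a 0 k * X k l * b 0 l.
    by rewrite mul_mx_diag mxE mul_diag_mx mxE.
  have M2 (a : 'rV[R]_M) k l : (Q *m diag_mx a *m Q^T) k l = \sum_e Q k e * a 0 e * Q l e.
    by rewrite mul_mx_diag; rewrite mxE; apply: eq_bigr => e _; rewrite !mxE.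
  have M3 (X : 'M[R]_N) k l : (X + 1%:M) k l = X k l + (k == l)%:R by rewrite !mxE.
  rewrite /Ttilde /hWrho M1 M3 M2 !mxE /A; congr (_ * (_ + _) * _).
  by apply: eq_bigr => e _; rewrite !mxE.
have dbound j : d j <= 1 + rho_max * E%:R * D%:R.
  rewrite /d /hdtilde lerD2l.
  rewrite (bigID (fun e => j \in edge e)) /=.
  rewrite [X in _ + X]big1 ?addr0; last by move=> e /HQ0 ->; rewrite mulr0 !mul0r.
  apply: le_trans (_ : \sum_(e | j \in edge e) (rho_max * E%:R) <= _).
    apply: ler_sum => e _.
    have r0 : 0 <= rho (dl e) by apply: Hrho.
    have rm : rho (dl e) <= rho_max by apply: Hmax; rewrite dl0 dlE.
    case/andP: (Hw e) => w0 w1.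
    rewrite -/(dl e) [rho_max * _]mulrC -!mulrA.
    apply: le_trans (_ : 1 * (1 * (E%:R * rho_max)) <= _); last by rewrite !mul1r.
    apply: ler_pM => //; first by rewrite !mulr_ge0.
    apply: ler_pM => //; first by rewrite !mulr_ge0.
    by apply: ler_pM.
  have rm0 : 0 <= rho_max by apply: le_trans (Hrho 0 (lexx 0)) _; apply: Hmax; rewrite lexx ler0n.
  rewrite sumr_const -[X in X <= _]mulr_natr ler_wpM2l ?mulr_ge0 ?ler0n // ler_nat.
  by apply: leq_trans (HD j); apply: subset_leq_card; apply/subsetP => e; rewrite inE.
rewrite /norm1; apply: (big_ind (fun x => x <= _)) => [|x y hx hy|j _]; [exact: sqrtr_ge0|by rewrite ge_max hx hy|].
apply: le_trans (_ : Num.sqrt (d j) <= _); last by rewrite ler_sqrt ?dbound // (le_trans _ (dbound j)) // ltW.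
apply: le_trans (_ : \sum_i (A i j + (i == j)%:R) * (Num.sqrt (d j))^-1 <= _).
  apply: ler_sum => i _; rewrite TE ger0_norm; last first.
    have h1 : 0 <= A i j + (i == j)%:R by apply: addr_ge0; [exact: A0|exact: ler0n].
    by apply: mulr_ge0; [apply: mulr_ge0 => //|]; rewrite invr_ge0 ltW ?sq0.
  rewrite ler_wpM2r //; first by rewrite invr_ge0 ltW ?sq0.
  apply: le_trans (_ : 1 * (A i j + (i == j)%:R) <= _); last by rewrite mul1r.
  by rewrite ler_wpM2r ?addr_ge0 ?ler0n // invf_le1.
rewrite -big_distrl /= big_split /=.
have -> : \sum_i (i == j)%:R = 1 :> R.
  by rewrite (bigD1 j) //= eqxx big1 ?addr0 // => i /negbTE ->.
rewrite addrC (eq_bigr (fun i => A j i)) => [|i _]; last exact: AC.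
rewrite -dE -{1}(sqr_sqrtr (ltW (d0 j))) expr2 mulfK //.
exact: lt0r_neq0.
Qed.
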